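(* Let $\mu$ be a finite positive measure on $(\Omega,\mathcal B)$ with no atoms. Let $X=\operatorname{sp}\{1_A-1_B: A,B\in\mathcal B,\ \mu(A)=\mu(B)\}$, let $X_1$ be the norm closure of $X$ in $L_1(\mu)$ and $X_\infty$ the weak$^*$ ($\sigma(L_\infty,L_1)$) closure of $X$ in $L_\infty(\mu)$. Then $X_1=L^0_1$ and $X_\infty=L^0_\infty$, where $L^0_1=\{f\in L_1(\mu):\int f\,d\mu=0\}$ and $L^0_\infty=\{f\in L_\infty(\mu):\int f\,d\mu=0\}$.
   Context: An atom of $\mu$ is a set $A\in\mathcal B$ with $\mu(A)>0$ such that every measurable $B\subset A$ has $\mu(B)\in\{0,\mu(A)\}$. $\operatorname{sp}$ denotes linear span. *)

(* Defs.v *)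
From HB Require Import structures.
From mathcomp Require Import all_boot all_order all_algebra.
From mathcomp Require Import all_classical all_reals all_analysis.
Set Implicit Arguments. Unset Strict Implicit. Unset Printing Implicit Defensive.
Import Order.TTheory GRing.Theory Num.Theory.
Local Open Scope classical_set_scope.
Local Open Scope ring_scope.

(* Elements of L_p are represented by real-valued functions (representatives);
   all sets below are invariant under a.e. modification. *)

Section Defs.
Context {d : measure_display} {T : measurableType d} {R : realType}.
Variable mu : {measure set T -> \bar R}.

Definition is_atom (A : set T) : Prop :=
  measurable A /\ (0 < mu A)%E /\
  forall B, measurable B -> B `<=` A -> mu B = 0%E \/ mu B = mu A.

Definition no_atoms : Prop := forall A, ~ is_atom A.

Definition Xspan : set (T -> R) :=
  [set f : T -> R | exists n (c : 'I_n -> R) (A B : 'I_n -> set T),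
     (forall i, measurable (A i) /\ measurable (B i) /\ mu (A i) = mu (B i)) /\
     f = (fun x => \sum_(i < n) c i * (\1_(A i) x - \1_(B i) x))].

Definition L1 : set (T -> R) := [set f : T -> R | mu.-integrable setT (EFin \o f)].

Definition Linfty : set (T -> R) :=
  [set f : T -> R | measurable_fun setT f /\ exists M : R, {ae mu, forall x, `|f x| <= M}].

Definition L1_closure (S : set (T -> R)) : set (T -> R) :=
  [set f : T -> R | f \in L1 /\ forall e : R, 0 < e ->
     exists2 g, S g & (\int[mu]_x (`|f x - g x|)%:E < e%:E)%E].

(* weak* (sigma(L_infty, L_1)) closure in L_infty: every basic weak*
   neighbourhood of f, given by finitely many h_1..h_n in L_1 and e > 0,
   meets S *)
Definition weakstar_closure (S : set (T -> R)) : set (T -> R) :=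
  [set f : T -> R | f \in Linfty /\ forall (n : nat) (h : 'I_n -> T -> R) (e : R),
     (forall i, h i \in L1) -> 0 < e ->
     exists2 g, S g & forall i,
       (`| \int[mu]_x ((f x - g x) * h i x)%:E | < e%:E)%E].

Definition L1_0 : set (T -> R) :=
  [set f : T -> R | f \in L1 /\ (\int[mu]_x (f x)%:E = 0)%E].

Definition Linfty_0 : set (T -> R) :=
  [set f : T -> R | f \in Linfty /\ (\int[mu]_x (f x)%:E = 0)%E].

End Defs.

(* Main.v *)
Require Import Defs.
From HB Require Import structures.
From mathcomp Require Import all_boot all_order all_algebra.
From mathcomp Require Import all_classical all_reals all_analysis.
From mathcomp Require Import lra.
From mathcomp Require Import measurable_realfun.
Import numFieldNormedType.Exports.
Import Order.TTheory GRing.Theory Num.Theory.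
Set Implicit Arguments. Unset Strict Implicit.
Local Open Scope classical_set_scope.
Local Open Scope ring_scope.


Section Nu.
Context (d : measure_display) (T : measurableType d) (R : realType)
  (mu : {finite_measure set T -> \bar R}).

Definition nu (A : set T) : R := fine (mu A).

Lemma nuE A : measurable A -> mu A = (nu A)%:E.
Proof. by move=> mA; rewrite /nu fineK //; apply: fin_num_measure. Qed.

Lemma nu_ge0 A : 0 <= nu A.
Proof. by rewrite /nu fine_ge0. Qed.

Lemma nu0 : nu set0 = 0.
Proof. by rewrite /nu measure0. Qed.

Lemma nuU A B : measurable A -> measurable B -> A `&` B = set0 ->
  nu (A `|` B) = nu A + nu B.
Proof.
move=> mA mB AB; apply: EFin_inj; rewrite EFinD -!nuE //; last exact: measurableU.
by rewrite measureU.
Qed.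

Lemma nu_le A B : measurable A -> measurable B -> A `<=` B -> nu A <= nu B.
Proof.
by move=> mA mB AB; rewrite -lee_fin -!nuE // le_measure ?inE.
Qed.

Lemma nuD A B : measurable A -> measurable B -> B `<=` A ->
  nu (A `\` B) = nu A - nu B.
Proof.
move=> mA mB BA; have -> : nu A = nu (B `|` (A `\` B)) by rewrite setDUK.
rewrite nuU //; [by rewrite addrAC subrr add0r| exact: measurableD|].
by rewrite setDE setICA setICr setI0.
Qed.

End Nu.



Lemma exists_nat_gt (R : realType) (x : R) : exists n : nat, x < n%:R.
Proof. by exists (Num.trunc x).+1; exact: truncnS_gt. Qed.

Lemma nat_le_exp2 (R : realType) (n : nat) : n%:R <= (2 : R) ^+ n.
Proof.
have := ltn_expl n (isT : 1 < 2)%N => /ltnW; rewrite -(ler_nat R) natrX.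
by [].
Qed.

Section Sierp.
Context (d : measure_display) (T : measurableType d) (R : realType)
  (mu : {finite_measure set T -> \bar R}).
Hypothesis na : no_atoms mu.
Local Notation nu := (nu mu).
Let muE A : measurable A -> mu A = (nu A)%:E := @nuE d T R mu A.

Lemma split_half B : measurable B -> 0 < nu B ->
  exists C, [/\ measurable C, C `<=` B, 0 < nu C & nu C * 2 <= nu B].
Proof.
move=> mB nB.
have [C [mC [CB [C0 CB']]]] : exists C, measurable C /\ C `<=` B /\
    mu C <> 0%E /\ mu C <> mu B.
  apply: contrapT => H; apply: (na (A := B)); split => //; split.
    by change (0 < mu B)%E; rewrite muE // lte_fin.
  move=> C mC CB; change (mu C = 0%E \/ mu C = mu B); case: (pselect (mu C = 0%E)) => [->|C0]; first by left.
  case: (pselect (mu C = mu B)) => [->|CB']; first by right.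
  by exfalso; apply: H; exists C.
have nC0 : 0 < nu C.
  rewrite lt_neqAle nu_ge0 andbT; apply/eqP => e; apply: C0.
  by rewrite muE // -e.
have nCB : nu C < nu B.
  rewrite lt_neqAle nu_le // andbT; apply/eqP => e; apply: CB'.
  by rewrite !muE // e.
have [h|h] := leP (nu C * 2) (nu B).
  by exists C; split.
exists (B `\` C); split => //; [exact: measurableD| |];
  rewrite nuD //; lra.
Qed.

Lemma small_sub A : measurable A -> 0 < nu A -> forall e : R, 0 < e ->
  exists B, [/\ measurable B, B `<=` A, 0 < nu B & nu B < e].
Proof.
move=> mA nA e e0.
have H n : exists B, [/\ measurable B, B `<=` A, 0 < nu B & nu B * 2 ^+ n <= nu A].
  elim: n => [|n [B [mB BA nB nBn]]]; first by exists A; split; rewrite // expr0 mulr1.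
  have [C [mC CB nC nCB]] := split_half mB nB.
  exists C; split => //; first exact: subset_trans CB BA.
  by rewrite exprS mulrA (le_trans _ nBn) // ler_pM2r // exprn_gt0.
have [n hn] := exists_nat_gt (nu A / e).
have [B [mB BA nB nBn]] := H n.
exists B; split => //.
have h2 := nat_le_exp2 R n.
have : nu A / e < 2 ^+ n by apply: lt_le_trans h2.
rewrite ltr_pdivrMr // => h3.
have h4 : nu B * 2 ^+ n < e * 2 ^+ n by rewrite (le_lt_trans nBn) // mulrC.
by rewrite ltr_pM2r ?exprn_gt0 in h4.
Qed.

Section greedy.
Variables (A : set T) (t : R).
Hypotheses (mA : measurable A) (t0 : 0 <= t) (tA : t <= nu A).

Definition adm (B C : set T) :=
  [/\ measurable C, C `<=` A `\` B & nu B + nu C <= t].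

Lemma step_ex B : exists C, (measurable B /\ nu B <= t) ->
  adm B C /\ forall C', adm B C' -> nu C' <= 2 * nu C.
Proof.
case: (pselect (measurable B /\ nu B <= t)) => [[mB Bt]|nP]; last first.
  by exists set0.
pose E := [set x : R | exists C, adm B C /\ x = nu C].
have E0 : E 0 by exists set0; split; [split|]; rewrite ?nu0 ?addr0.
have hs : has_sup E.
  split; first by exists 0.
  exists t => x [C [[mC _ hC] ->]]; have := nu_ge0 mu B; lra.
have s0 : 0 <= sup E by apply: sup_upper_bound.
have [sz|sp] := eqVneq (sup E) 0.
  exists set0 => _; split; first by split; rewrite ?nu0 ?addr0.
  move=> C' aC'; rewrite nu0 mulr0 -sz; apply: sup_upper_bound => //.
  by exists C'.
have sp' : 0 < sup E by rewrite lt_neqAle eq_sym sp.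
have h2 : 0 < sup E / 2 by rewrite divr_gt0.
have [x [C [aC ->]] hx] := sup_adherent h2 hs.
exists C => _; split => // C' aC'.
have : nu C' <= sup E by apply: sup_upper_bound => //; exists C'.
lra.
Qed.

Definition nxtC (B : set T) : set T := projT1 (cid (step_ex B)).
Definition nxt (B : set T) : set T := B `|` nxtC B.
Definition Bs (n : nat) : set T := iter n nxt set0.

Lemma nxtC_spec B : measurable B -> nu B <= t ->
  adm B (nxtC B) /\ forall C', adm B C' -> nu C' <= 2 * nu (nxtC B).
Proof. by move=> mB Bt; exact: (projT2 (cid (step_ex B))). Qed.

Lemma Bs_inv n : [/\ measurable (Bs n), Bs n `<=` A & nu (Bs n) <= t].
Proof.
elim: n => [|n [mB BA Bt]]; first by rewrite /Bs /= nu0; split.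
have [[mC CA Ct] _] := nxtC_spec mB Bt.
rewrite /Bs iterS -/(Bs n) /nxt.
have dj : Bs n `&` nxtC (Bs n) = set0.
  by apply/seteqP; split => // x [xB /CA [_]].
split; first exact: measurableU.
  by move=> x [//|/CA[]]; [exact: BA|].
by rewrite nuU.
Qed.

Lemma Bs_S n : nu (Bs n.+1) = nu (Bs n) + nu (nxtC (Bs n)).
Proof.
have [mB _ Bt] := Bs_inv n.
have [[mC CA Ct] _] := nxtC_spec mB Bt.
have dj : Bs n `&` nxtC (Bs n) = set0.
  by apply/seteqP; split => // x [xB /CA [_]].
by rewrite /Bs iterS -/(Bs n) /nxt nuU.
Qed.

Lemma Bs_nd : {homo Bs : n m / (n <= m)%N >-> (n <= m)%O}.
Proof.
apply/nondecreasing_seqP => n; rewrite subsetEset /Bs iterS -/(Bs n) /nxt.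
by move=> x xB; left.
Qed.

Lemma sierp_ex : exists B, [/\ measurable B, B `<=` A & nu B = t].
Proof.
pose U := \bigcup_n Bs n.
have mBs n : measurable (Bs n) by have [] := Bs_inv n.
have mU : measurable U by exact: bigcupT_measurable.
have UA : U `<=` A by move=> x [n _]; have [_ + _] := Bs_inv n; apply.
have cv := nondecreasing_cvg_mu (mu:=mu) mBs mU Bs_nd.
have Ut : nu U <= t.
  rewrite -lee_fin -muE // -(cvg_lim _ cv) //; apply: lime_le.
    by apply/cvg_ex; eexists; exact: cv.
  by apply: nearW => n /=; have [_ _ h] := Bs_inv n; rewrite muE.
exists U; split => //; apply/eqP; rewrite eq_le Ut /=; rewrite leNgt.
apply/negP => Ult.
have mAU : measurable (A `\` U) by exact: measurableD.
have nAU : 0 < nu (A `\` U).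
  by rewrite nuD // subr_gt0; exact: lt_le_trans Ult tA.
have tU : 0 < t - nu U by rewrite subr_gt0.
have [D [mD DAU D0 Dt]] := small_sub mAU nAU tU.
have key n : nu D <= 2 * nu (nxtC (Bs n)).
  have [mB BA Bt] := Bs_inv n.
  apply: (nxtC_spec mB Bt).2; split => //.
    move=> x /DAU [xA xU]; split => // xB; apply: xU; by exists n.
  have : nu (Bs n) <= nu U by apply: nu_le => // x xB; exists n.
  lra.
have lin n : n%:R * nu D <= 2 * nu (Bs n).
  elim: n => [|n ih]; first by rewrite /Bs /= nu0 mul0r mulr0.
  rewrite Bs_S -natr1 mulrDl mul1r mulrDr; have := key n; lra.
have [n hn] := exists_nat_gt (2 * t / nu D).
have := lin n; have [_ _ Bt] := Bs_inv n.
move: hn; rewrite ltr_pdivrMr // => hn.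
lra.
Qed.

End greedy.

Lemma sierpinski A t : measurable A -> 0 <= t -> t <= nu A ->
  exists B, [/\ measurable B, B `<=` A & nu B = t].
Proof. by move=> mA t0 tA; exact: sierp_ex. Qed.

End Sierp.

From mathcomp Require Import ring.

Lemma ind1 (T : Type) (R : realType) (A : set T) x : A x -> \1_A x = 1 :> R.
Proof. by move=> h; rewrite indicE mem_set. Qed.
Lemma ind0 (T : Type) (R : realType) (A : set T) x : ~ A x -> \1_A x = 0 :> R.
Proof. by move=> h; rewrite indicE memNset. Qed.

Section Xlemmas.
Context (d : measure_display) (T : measurableType d) (R : realType)
  (mu : {finite_measure set T -> \bar R}).
Local Notation X := (Xspan mu).

Lemma X0 : X (fun _ => 0).
Proof.
exists 0%N, (fun _ => 0), (fun _ => set0), (fun _ => set0); split.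
  by case.
by apply: funext => x; rewrite big_ord0.
Qed.

Lemma Xpair A B : measurable A -> measurable B -> mu A = mu B ->
  X (fun x => \1_A x - \1_B x).
Proof.
move=> mA mB AB.
exists 1%N, (fun _ => 1), (fun _ => A), (fun _ => B); split => //.
by apply: funext => x; rewrite big_ord1 mul1r.
Qed.

Lemma XZ c f : X f -> X (fun x => c * f x).
Proof.
move=> [n [c0 [A [B [h ->]]]]].
exists n, (fun i => c * c0 i), A, B; split => //.
by apply: funext => x; rewrite mulr_sumr; apply: eq_bigr => i _; rewrite mulrA.
Qed.

Lemma XD f g : X f -> X g -> X (fun x => f x + g x).
Proof.
move=> [n [c0 [A [B [h ->]]]]] [m [c1 [A1 [B1 [h1 ->]]]]].
pose sel (U : Type) (u : 'I_n -> U) (v : 'I_m -> U) (i : 'I_(n + m)) :=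
  match fintype.split i with inl j => u j | inr j => v j end.
exists (n + m)%N, (sel _ c0 c1), (sel _ A A1), (sel _ B B1); split.
  by move=> i; rewrite /sel; case: (fintype.split i).
apply: funext => x; rewrite big_split_ord /=; congr (_ + _); apply: eq_bigr => i _.
  by rewrite /sel -[lshift m i]/(unsplit (inl i)) unsplitK.
by rewrite /sel -[rshift n i]/(unsplit (inr i)) unsplitK.
Qed.

Lemma XN f : X f -> X (fun x => - f x).
Proof. by move=> h; have := XZ (-1) h; under eq_fun do rewrite mulN1r. Qed.

Lemma XB f g : X f -> X g -> X (fun x => f x - g x).
Proof. by move=> hf hg; apply: XD => //; exact: XN. Qed.

Lemma X_ind (P : (T -> R) -> Prop) :
  P (fun _ => 0) ->
  (forall f c A B, measurable A -> measurable B -> mu A = mu B -> P f ->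
     P (fun x => f x + c * (\1_A x - \1_B x))) ->
  forall f, X f -> P f.
Proof.
move=> P0 PS f [n [c [A [B [h ->]]]]].
elim: n c A B h => [|n ih] c A B h.
  by under eq_fun do rewrite big_ord0.
under eq_fun do rewrite big_ord_recr /=.
have [mA [mB e]] := h ord_max.
apply: PS => //.
exact: (ih (fun i => c (widen_ord (leqnSn n) i)) (fun i => A (widen_ord (leqnSn n) i))
   (fun i => B (widen_ord (leqnSn n) i))).
Qed.

End Xlemmas.


Section Shape.
Context (d : measure_display) (T : measurableType d) (R : realType)
  (mu : {finite_measure set T -> \bar R}).
Hypothesis na : no_atoms mu.
Local Notation nu := (nu mu).
Local Notation X := (Xspan mu).
Let muE A : measurable A -> mu A = (nu A)%:E := @nuE d T R mu A.

Definition shape (P Q : set T) (x : T) : R :=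
  (nu Q * \1_P x - nu P * \1_Q x) / (nu P + nu Q).

Lemma shape_bound P Q x : P `&` Q = set0 -> `|shape P Q x| <= 1.
Proof.
move=> dj; rewrite /shape.
have p0 := nu_ge0 mu P; have q0 := nu_ge0 mu Q.
have [s0|sp] := eqVneq (nu P + nu Q) 0.
  by rewrite s0 invr0 mulr0 normr0.
have sp' : 0 < nu P + nu Q by rewrite lt_neqAle eq_sym sp addr_ge0.
rewrite normrM normfV (gtr0_norm sp') ler_pdivrMr // mul1r.
case: (pselect (P x)) => Px.
  have nQx : ~ Q x by move=> Qx; have : (P `&` Q) x by []; rewrite dj.
  rewrite ind1 // ind0 // mulr0 subr0 mulr1 ger0_norm //; lra.
rewrite (ind0 _ Px) mulr0 sub0r normrN.
case: (pselect (Q x)) => Qx.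
  by rewrite ind1 // mulr1 ger0_norm //; lra.
by rewrite ind0 // mulr0 normr0 addr_ge0.
Qed.

Lemma shapeN P Q x : shape P Q x = - shape Q P x.
Proof. by rewrite /shape -[RHS]mulNr opprB (addrC (nu Q)). Qed.

Lemma one_step P Q D x : measurable P -> measurable Q -> measurable D ->
  P `&` Q = set0 -> D `<=` Q -> nu D = nu P -> 0 < nu P ->
  shape P Q x = nu P / (nu P + nu Q) * (\1_P x - \1_D x)
              + nu Q / (nu P + nu Q) * shape P (Q `\` D) x.
Proof.
move=> mP mQ mD dj DQ DP p0.
have hQD : nu (Q `\` D) = nu Q - nu P by rewrite nuD // DP.
have pq : nu P <= nu Q by rewrite -DP nu_le.
rewrite /shape hQD.
have h1 : nu P + nu Q != 0 by apply/eqP; lra.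
have h2 : nu P + (nu Q - nu P) != 0 by apply/eqP; lra.
case: (pselect (P x)) => Px.
  have nQx : ~ Q x by move=> Qx; have : (P `&` Q) x by []; rewrite dj.
  have nDx : ~ D x by move=> /DQ.
  have nQDx : ~ (Q `\` D) x by move=> [].
  rewrite ind1 // (ind0 _ nQx) (ind0 _ nDx) (ind0 _ nQDx).
  by field; rewrite h1 h2.
case: (pselect (D x)) => Dx.
  have nQDx : ~ (Q `\` D) x by move=> [].
  rewrite (ind0 _ Px) (ind1 _ Dx) (ind1 _ (DQ _ Dx)) (ind0 _ nQDx).
  by field; rewrite h1 h2.
rewrite (ind0 _ Px) (ind0 _ Dx).
case: (pselect (Q x)) => Qx.
  have QDx : (Q `\` D) x by [].
  rewrite (ind1 _ Qx) (ind1 _ QDx).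
  by field; rewrite h1 h2.
have nQDx : ~ (Q `\` D) x by move=> [].
rewrite (ind0 _ Qx) (ind0 _ nQDx).
by field; rewrite h1 h2.
Qed.


Lemma reduce P (mP : measurable P) (p0 : 0 < nu P) n : forall Q,
  measurable Q -> P `&` Q = set0 -> nu Q < n%:R * nu P ->
  exists Q', [/\ measurable Q', Q' `<=` Q, nu Q' < nu P &
   exists g, X g /\ forall x,
     shape P Q x = g x + (nu P + nu Q') / (nu P + nu Q) * shape P Q' x].
Proof.
elim: n => [|n ih] Q mQ dj hQ.
  by have := nu_ge0 mu Q; rewrite mul0r in hQ; lra.
have q0 := nu_ge0 mu Q.
case: (ltP (nu Q) (nu P)) => [lt|ge].
  exists Q; split => //; exists (fun _ => 0); split; first exact: X0.
  move=> x; rewrite add0r divff ?mul1r //; apply/eqP; lra.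
have [D [mD DQ DP]] := sierpinski na mQ (ltW p0) ge.
pose Q1 := Q `\` D.
have mQ1 : measurable Q1 by exact: measurableD.
have dj1 : P `&` Q1 = set0.
  by apply/seteqP; split => // x [Px [Qx _]]; have : (P `&` Q) x by []; rewrite dj.
have hQ1 : nu Q1 = nu Q - nu P by rewrite nuD // DP.
have hQ1n : nu Q1 < n%:R * nu P by rewrite hQ1; move: hQ; rewrite -natr1 mulrDl mul1r; lra.
have [Q' [mQ' Q'Q1 lt [g1 [Xg1 hg1]]]] := ih Q1 mQ1 dj1 hQ1n.
exists Q'; split => //; first by move=> x /Q'Q1 [].
exists (fun x => nu P / (nu P + nu Q) * (\1_P x - \1_D x) + nu Q / (nu P + nu Q) * g1 x).
split.
  apply: XD; apply: XZ => //; apply: Xpair => //.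
  by rewrite !muE // DP.
move=> x; rewrite (one_step x mP mQ mD dj DQ DP p0) -/Q1 hg1 hQ1.
have h1 : nu P + nu Q != 0 by apply/eqP; lra.
have h2 : nu P + (nu Q - nu P) != 0 by apply/eqP; lra.
by field; rewrite h1 h2.
Qed.

Definition okk k P Q := exists g, X g /\ forall x, `|shape P Q x - g x| <= (2/3)^+k.

Lemma rec_step k : (forall P Q, measurable P -> measurable Q -> P `&` Q = set0 -> okk k P Q) ->
  forall P Q, measurable P -> measurable Q -> P `&` Q = set0 -> 0 < nu P -> nu P <= nu Q ->
  okk k.+1 P Q.
Proof.
move=> IH P Q mP mQ dj p0 pq.
have [D [mD DQ DP]] := sierpinski na mQ (ltW p0) pq.
pose Q1 := Q `\` D.
have mQ1 : measurable Q1 by exact: measurableD.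
have dj1 : P `&` Q1 = set0.
  by apply/seteqP; split => // x [Px [Qx _]]; have : (P `&` Q) x by []; rewrite dj.
have hQ1 : nu Q1 = nu Q - nu P by rewrite nuD // DP.
have [n hn] := exists_nat_gt (nu Q1 / nu P).
have hQ1n : nu Q1 < n%:R * nu P by move: hn; rewrite ltr_pdivrMr.
have [Q' [mQ' Q'Q1 lt [g1 [Xg1 hg1]]]] := reduce mP p0 mQ1 dj1 hQ1n.
have dj' : P `&` Q' = set0.
  by apply/seteqP; split => // x [Px /Q'Q1 [Qx _]]; have : (P `&` Q) x by []; rewrite dj.
have [g2 [Xg2 hg2]] := IH P Q' mP mQ' dj'.
have q'le : nu Q' <= nu Q1 by apply: nu_le.
have q'0 := nu_ge0 mu Q'.
exists (fun x => nu P / (nu P + nu Q) * (\1_P x - \1_D x) + nu Q / (nu P + nu Q) *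
   (g1 x + (nu P + nu Q') / (nu P + nu Q1) * g2 x)).
split.
  apply: XD; apply: XZ => //; first by apply: Xpair => //; rewrite !muE // DP.
  by apply: XD => //; apply: XZ.
move=> x.
have -> : shape P Q x - (nu P / (nu P + nu Q) * (\1_P x - \1_D x) + nu Q / (nu P + nu Q) *
   (g1 x + (nu P + nu Q') / (nu P + nu Q1) * g2 x)) =
   (nu P + nu Q') / (nu P + nu Q) * (shape P Q' x - g2 x).
  rewrite (one_step x mP mQ mD dj DQ DP p0) -/Q1 hg1 hQ1.
  have h1 : nu P + nu Q != 0 by apply/eqP; lra.
  have h2 : nu P + (nu Q - nu P) != 0 by apply/eqP; lra.
  by field; rewrite h1 h2.
have cpos : 0 < (nu P + nu Q') / (nu P + nu Q) by apply: divr_gt0; lra.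
rewrite normrM (gtr0_norm cpos) exprS.
apply: ler_pM => //; first exact: ltW.
rewrite ler_pdivrMr; last by lra.
rewrite hQ1 in q'le; lra.
Qed.

Lemma rec_all k : forall P Q, measurable P -> measurable Q -> P `&` Q = set0 -> okk k P Q.
Proof.
elim: k => [|k IH] P Q mP mQ dj.
  exists (fun _ => 0); split; first exact: X0.
  by move=> x; rewrite subr0 expr0 shape_bound.
have p0 := nu_ge0 mu P; have q0 := nu_ge0 mu Q.
have [pz|pnz] := eqVneq (nu P) 0.
  exists (fun x => nu Q / (nu P + nu Q) * (\1_P x - \1_set0 x)); split.
    by apply: XZ; apply: Xpair => //; rewrite muE // pz measure0.
  move=> x; rewrite /shape pz (@ind0 _ _ set0 x) // mul0r subr0 add0r subr0.
  by rewrite mulrAC subrr normr0 exprn_ge0.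
have [qz|qnz] := eqVneq (nu Q) 0.
  exists (fun x => - (nu P / (nu P + nu Q)) * (\1_Q x - \1_set0 x)); split.
    by apply: XZ; apply: Xpair => //; rewrite muE // qz measure0.
  move=> x; rewrite /shape qz (@ind0 _ _ set0 x) // mul0r sub0r addr0 subr0.
  by rewrite !mulNr opprK mulrAC addNr normr0 exprn_ge0.
have pp : 0 < nu P by rewrite lt_neqAle eq_sym pnz.
have qp : 0 < nu Q by rewrite lt_neqAle eq_sym qnz.
case: (leP (nu P) (nu Q)) => h; first exact: rec_step.
have dj2 : Q `&` P = set0 by rewrite setIC.
have [g [Xg hg]] := rec_step IH mQ mP dj2 qp (ltW h).
exists (fun x => - g x); split; first exact: XN.
move=> x; rewrite shapeN opprK -normrN opprD opprK; exact: hg.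
Qed.

End Shape.


Lemma bern (R : realType) (x : R) n : 0 <= x -> 1 + n%:R * x <= (1 + x) ^+ n.
Proof.
move=> x0; elim: n => [|n ih]; first by rewrite mul0r addr0 expr0.
rewrite exprS -natr1.
have h : 0 <= n%:R * x * x by rewrite !mulr_ge0.
have : (1 + n%:R * x) * (1 + x) <= (1 + x) * (1 + x) ^+ n.
  by rewrite mulrC ler_pM2l //; lra.
nra.
Qed.

Lemma pow23 (R : realType) (e : R) : 0 < e -> exists k, (2 / 3 : R) ^+ k <= e.
Proof.
move=> e0; have [k hk] := exists_nat_gt (2 / e).
exists k.
have h1 := @bern R (1/2) k.
have -> : (2 / 3 : R) ^+ k = ((1 + 1 / 2) ^+ k)^-1.
  by rewrite -exprVn; congr (_ ^+ _); field.
have p1 : 0 < 1 + k%:R * (1 / 2) :> R by apply: ltr_wpDr; rewrite ?mulr_ge0 // ?ler0n.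
have h1' := h1 (_ : 0 <= 1 / 2 :> R).
rewrite -[leLHS]div1r ler_pdivrMr; last by apply: exprn_gt0; lra.
move: hk; rewrite ltr_pdivrMr // => hk.
have : e * (1 + k%:R * (1 / 2)) <= e * (1 + 1 / 2) ^+ k.
  by rewrite ler_pM2l // h1'; lra.
nra.
Qed.


Definition stairf (R : realType) (e y : R) (K : nat) : R :=
  \sum_(k < K) e * ((((k.+1)%:R * e <= y)%R : bool)%:R).

Lemma stair (R : realType) (e y : R) K : 0 < e -> 0 <= y ->
  [/\ stairf e y K <= y, stairf e y K <= K%:R * e &
     (stairf e y K = K%:R * e \/ y < stairf e y K + e)].
Proof.
move=> e0 y0; rewrite /stairf; elim: K => [|K [ih1 ih2 ih3]] /=.
  by rewrite big_ord0 mul0r; split => //; left.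
rewrite big_ord_recr /=.
set s := \sum_(i < K) _ in ih1 ih2 ih3 *.
case: (boolP ((K.+1)%:R * e <= y)) => h; rewrite /= ?mulr1 ?mulr0 ?addr0.
  have sK : s = K%:R * e.
    case: ih3 => // ih3; exfalso; move: h; rewrite -natr1 mulrDl mul1r; lra.
  rewrite sK -natr1 mulrDl mul1r; move: h; rewrite -natr1 mulrDl mul1r => h; split; [exact: h| exact: lexx | by left].
rewrite -natr1 mulrDl mul1r; split => //; first lra.
right; case: ih3 => [->|//]; move: h; rewrite -natr1 mulrDl mul1r; lra.
Qed.

Section Pap.
Context (d : measure_display) (T : measurableType d) (R : realType)
  (mu : {finite_measure set T -> \bar R}).
Hypothesis na : no_atoms mu.
Local Notation nu := (nu mu).
Local Notation X := (Xspan mu).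
Let muE A : measurable A -> mu A = (nu A)%:E := @nuE d T R mu A.

Definition Pap (f : T -> R) := forall e : R, 0 < e ->
  exists g, X g /\ exists c : R, forall x, `|f x - c - g x| <= e.

Lemma Pap_indic E : measurable E -> Pap (\1_E).
Proof.
move=> mE e e0.
have mT : measurable (@setT T) by [].
have [mz|mnz] := eqVneq (nu setT) 0.
  have Ez : nu E = 0.
    apply/eqP; rewrite eq_le nu_ge0 andbT -mz; exact: nu_le.
  exists (fun x => \1_E x - \1_set0 x); split.
    by apply: Xpair => //; rewrite muE // Ez measure0.
  by exists 0 => x; rewrite (@ind0 _ _ set0 x) // !subr0 subrr normr0 ltW.
have [k hk] := pow23 e0.
have mC : measurable (~` E) by exact: measurableC.
have dj : E `&` ~` E = set0 by rewrite setICr.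
have [g [Xg hg]] := rec_all na k mE mC dj.
exists g; split => //; exists (nu E / nu setT) => x.
have hC : nu (~` E) = nu setT - nu E by rewrite -setTD nuD.
have sh : shape mu E (~` E) x = \1_E x - nu E / nu setT.
  rewrite /shape hC.
  have -> : nu E + (nu setT - nu E) = nu setT by rewrite addrC subrK.
  case: (pselect (E x)) => Ex.
    have nCx : ~ (~` E) x by [].
    rewrite (ind1 _ Ex) (ind0 _ nCx).
    by field.
  have Cx : (~` E) x by [].
  rewrite (ind0 _ Ex) (ind1 _ Cx).
  by field.
by rewrite -sh (le_trans (hg x)).
Qed.

Lemma Pap_D f g : Pap f -> Pap g -> Pap (fun x => f x + g x).
Proof.
move=> hf hg e e0.
have e2 : 0 < e / 2 by rewrite divr_gt0.
have [g1 [X1 [c1 h1]]] := hf _ e2.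
have [g2 [X2 [c2 h2]]] := hg _ e2.
exists (fun x => g1 x + g2 x); split; first exact: XD.
exists (c1 + c2) => x.
have -> : f x + g x - (c1 + c2) - (g1 x + g2 x) = (f x - c1 - g1 x) + (g x - c2 - g2 x).
  by ring.
apply: (le_trans (ler_normD _ _)); have := h1 x; have := h2 x; lra.
Qed.

Lemma Pap_Z a f : Pap f -> Pap (fun x => a * f x).
Proof.
move=> hf e e0.
have [az|anz] := eqVneq a 0.
  exists (fun _ => 0); split; first exact: X0.
  by exists 0 => x; rewrite az mul0r !subr0 normr0 ltW.
have ea : 0 < e / `|a| by rewrite divr_gt0 // normr_gt0.
have [g [Xg [c h]]] := hf _ ea.
exists (fun x => a * g x); split; first exact: XZ.
exists (a * c) => x.
have -> : a * f x - a * c - a * g x = a * (f x - c - g x) by ring.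
rewrite normrM -ler_pdivlMl ?normr_gt0 // mulrC; exact: h.
Qed.

Lemma Pap_cst a : Pap (fun _ => a).
Proof.
move=> e e0; exists (fun _ => 0); split; first exact: X0.
by exists a => x; rewrite subrr subr0 normr0 ltW.
Qed.

Lemma Pap_lim f : (forall e : R, 0 < e -> exists s, Pap s /\ forall x, `|f x - s x| <= e) ->
  Pap f.
Proof.
move=> H e e0.
have e2 : 0 < e / 2 by rewrite divr_gt0.
have [s [Ps hs]] := H _ e2.
have [g [Xg [c hc]]] := Ps _ e2.
exists g; split => //; exists c => x.
have -> : f x - c - g x = (f x - s x) + (s x - c - g x) by ring.
apply: (le_trans (ler_normD _ _)); have := hs x; have := hc x; lra.
Qed.

Lemma Pap_nonneg (f : T -> R) (M : R) : measurable_fun setT f -> (forall x, 0 <= f x <= M) -> Pap f.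
Proof.
move=> mf hb; apply: Pap_lim => e e0.
have [K hK] := exists_nat_gt (M / e).
pose E (k : nat) := f @^-1` [set y | (k.+1)%:R * e <= y].
have mE k : measurable (E k).
  rewrite /E -[X in measurable X]setTI; apply: mf => //.
  rewrite (_ : [set y | (k.+1)%:R * e <= y] = `[(k.+1)%:R * e, +oo[%classic).
    exact: measurable_itv.
  by apply/seteqP; split => y /=; rewrite in_itv /= andbT.
exists (fun x => \sum_(k < K) e * \1_(E k) x); split.
  elim: K {hK} => [|K ih].
    by under eq_fun do rewrite big_ord0; exact: Pap_cst.
  under eq_fun do rewrite big_ord_recr /=.
  by apply: Pap_D => //; apply: Pap_Z; exact: Pap_indic.
move=> x; have /andP [f0 fM] := hb x.
have [s1 s2 s3] := stair K e0 f0.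
have -> : \sum_(k < K) e * \1_(E k) x = stairf e (f x) K.
  apply: eq_bigr => k _; rewrite indicE.
  have -> : (x \in E k) = ((k.+1)%:R * e <= f x)%R.
    by apply/idP/idP => [/set_mem|h]; [|apply: mem_set].
  by [].
set s := stairf _ _ _ in s1 s2 s3 *.
move: hK; rewrite ltr_pdivrMr // => hK.
rewrite ger0_norm; last by lra.
case: s3 => [h|h]; lra.
Qed.

Lemma Pap_bounded (f : T -> R) (M : R) : measurable_fun setT f -> (forall x, `|f x| <= M) -> Pap f.
Proof.
move=> mf hb.
have : Pap (fun x => (f x + M) + (- M)).
  apply: Pap_D; last exact: Pap_cst.
  apply: (@Pap_nonneg _ (M + M)).
    by apply: measurable_realfun.measurable_funD => //; exact: measurable_cst.
  move=> x; have := hb x; rewrite ler_norml => /andP [h1 h2].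
  by apply/andP; split; lra.
move=> h; have -> : f = (fun x => f x + M + - M) by apply: funext => x; ring.
exact: h.
Qed.

End Pap.


Section Integ.
Context (d : measure_display) (T : measurableType d) (R : realType)
  (mu : {finite_measure set T -> \bar R}).
Local Notation nu := (nu mu).
Local Notation X := (Xspan mu).
Let muE A : measurable A -> mu A = (nu A)%:E := @nuE d T R mu A.
Let muE2 A : measurable A -> (mu : {measure set T -> \bar R}) A = (nu A)%:E := @nuE d T R mu A.

Lemma muT_fin : (mu setT < +oo)%E.
Proof. by rewrite muE // ltry. Qed.

Lemma int_bdd (f : T -> R) (M : R) : measurable_fun setT f -> (forall x, `|f x| <= M) ->
  mu.-integrable setT (EFin \o f).
Proof.
move=> mf hb; apply: measurable_bounded_integrable => //; first exact: muT_fin.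
exists M; split; rewrite ?num_real // => y My z _ /=.
by rewrite (le_trans (hb z)) // ltW.
Qed.

Definition good (g : T -> R) := [/\ measurable_fun setT g, exists M : R, forall x, `|g x| <= M &
  (\int[mu]_x (g x)%:E = 0)%E].

Lemma Xgood g : X g -> good g.
Proof.
move=> Xg; apply: (@X_ind d T R mu good _ _ g Xg).
  split; first exact: measurable_cst.
    by exists 0 => x; rewrite normr0.
  by rewrite integral0.
move=> f c A B mA mB AB [mf [M hM] If].
have mAB : measurable_fun setT (fun x => \1_A x - \1_B x : R).
  by apply: measurable_realfun.measurable_funB; exact: measurable_realfun.measurable_indic.
have mc : measurable_fun setT (fun x => c * (\1_A x - \1_B x)).
  by apply: measurable_realfun.measurable_funM => //; exact: measurable_cst.
have bAB x : `|\1_A x - \1_B x| <= 1 :> R.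
  rewrite !indicE; case: (x \in A); case: (x \in B) => /=;
    by rewrite ?subrr ?subr0 ?sub0r ?normrN ?normr0 ?normr1.
split.
- exact: measurable_realfun.measurable_funD.
- exists (M + `|c|) => x; apply: (le_trans (ler_normD _ _)).
  apply: lerD; first exact: hM.
  by rewrite normrM -[X in _ <= X]mulr1 ler_wpM2l.
have i1 : mu.-integrable setT (EFin \o f) by exact: int_bdd hM.
have i2 : mu.-integrable setT (EFin \o (fun x => c * (\1_A x - \1_B x))).
  apply: (int_bdd (M := `|c|)) => // x.
  by rewrite normrM -[X in _ <= X]mulr1 ler_wpM2l.
under eq_integral do rewrite EFinD.
rewrite (@integralD_EFin _ _ _ mu setT measurableT f _ i1 i2) /= If add0e.
under eq_integral do rewrite EFinM.
rewrite integralZl //; last exact: (int_bdd (M := 1)).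
rewrite integralB_EFin //; try exact: integrable_indic.
have nAB : nu A = nu B by apply: EFin_inj; rewrite -!muE //; exact: AB.
by rewrite !integral_indic // !setIT !muE2 // nAB subee ?mule0.
Qed.

End Integ.



Section Final.
Context (d : measure_display) (T : measurableType d) (R : realType)
  (mu : {finite_measure set T -> \bar R}).
Local Notation nu := (nu mu).
Local Notation X := (Xspan mu).
Let muE A : measurable A -> mu A = (nu A)%:E := @nuE d T R mu A.
Let muE2 A : measurable A -> (mu : {measure set T -> \bar R}) A = (nu A)%:E := @nuE d T R mu A.

Lemma Ri_good g : X g -> \int[mu]_x g x = 0.
Proof. by move=> /Xgood [_ _ h]; rewrite /Rintegral h. Qed.

Lemma Xint g : X g -> mu.-integrable setT (EFin \o g).
Proof. move=> /Xgood [mg [M hM] _]; exact: (int_bdd mu mg hM). Qed.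

Lemma cbound (s g : T -> R) (c e M : R) : measurable_fun setT s -> (forall x, `|s x| <= M) ->
  X g -> (forall x, `|s x - c - g x| <= e) ->
  `|c| * nu setT <= `|\int[mu]_x s x| + e * nu setT.
Proof.
move=> ms hs Xg hg.
have [mg [Mg hMg] _] := Xgood Xg.
have is_ := int_bdd mu ms hs.
have ig := int_bdd mu mg hMg.
have ic : mu.-integrable setT (EFin \o (fun _ : T => c)) := finite_measure_integrable_cst _ _ measurableT.
have ie : mu.-integrable setT (EFin \o (fun _ : T => e)) := finite_measure_integrable_cst _ _ measurableT.
have msc : measurable_fun setT (fun x => s x - c).
  by apply: measurable_realfun.measurable_funB => //; exact: measurable_cst.
have isc : mu.-integrable setT (EFin \o (fun x => s x - c)).
  apply: (int_bdd mu (M := M + `|c|)) => // x.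
  by rewrite (le_trans (ler_normB _ _)) // lerD.
have mphi : measurable_fun setT (fun x => s x - c - g x).
  exact: measurable_realfun.measurable_funB.
have iphi : mu.-integrable setT (EFin \o (fun x => s x - c - g x)).
  exact: (int_bdd mu (M := e)).
have iaphi : mu.-integrable setT (EFin \o (fun x => `|s x - c - g x|)).
  exact: (integrable_norm iphi).
have h1 : \int[mu]_x (s x - c - g x) = \int[mu]_x s x - c * nu setT.
  rewrite RintegralB // RintegralB // Rintegral_cst // (Ri_good Xg) subr0.
  by [].
have h2 : `|\int[mu]_x (s x - c - g x)| <= e * nu setT.
  apply: (le_trans (le_normr_Rintegral _ _)) => //.
  rewrite -[X in _ <= X * _]mulr1 -Rintegral_cst // mulr1.
  by apply: le_Rintegral => // x _; exact: hg.
have -> : `|c| * nu setT = `|c * nu setT|.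
  by rewrite normrM (ger0_norm (nu_ge0 mu setT)).
have -> : c * nu setT = \int[mu]_x s x - \int[mu]_x (s x - c - g x) by rewrite h1; ring.
apply: (le_trans (ler_normB _ _)); lra.
Qed.

Lemma linf_int (f : T -> R) (M : R) : measurable_fun setT f ->
  {ae mu, forall x, `|f x| <= M} -> mu.-integrable setT (EFin \o f).
Proof.
move=> mf hM; apply/integrableP; split; first exact/measurable_realfun.measurable_EFinP.
apply: (@le_lt_trans _ _ (\int[mu]_x (cst (`|M|)%:E x))%E).
  apply: ae_ge0_le_integral => //.
  - apply: measurableT_comp => //; exact/measurable_EFinP.
  - by move=> x _; rewrite lee_fin.
  - move: hM; apply: filterS => x hx _ /=; rewrite lee_fin (le_trans hx) //; exact: ler_norm.
by rewrite integral_cst // muE2 // -EFinM ltry.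
Qed.

Lemma linf_sub : weakstar_closure mu X `<=` Linfty_0 mu.
Proof.
move=> f [fL H]; split => //.
have [mf [M hM]] : Linfty mu f by move/set_mem: fL.
have intf := linf_int mf hM.
pose h : 'I_1 -> T -> R := fun _ _ => 1.
have hL : forall i, h i \in L1 mu.
  by move=> i; apply/mem_set; exact: finite_measure_integrable_cst.
have fin := integrable_fin_num measurableT intf.
rewrite -(fineK fin); congr EFin.
apply/eqP; rewrite -normr_le0; apply/ler_addgt0Pr => e e0; rewrite add0r.
have [g Xg hg] := H 1%N h e hL e0.
have := hg ord0; rewrite /h.
under eq_integral do rewrite mulr1.
have ig := Xint Xg.
have [_ _ Ig] := Xgood Xg.
rewrite integralB_EFin // Ig sube0 -(fineK fin) /= lte_fin.
by move/ltW.
Qed.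

Lemma l1_sub : L1_closure mu X `<=` L1_0 mu.
Proof.
move=> f [fL H]; split => //.
have intf : mu.-integrable setT (EFin \o f) by move/set_mem: fL.
have fin := integrable_fin_num measurableT intf.
rewrite -(fineK fin); congr EFin.
apply/eqP; rewrite -normr_le0; apply/ler_addgt0Pr => e e0; rewrite add0r.
have [g Xg hg] := H e e0.
have ig := Xint Xg.
have [mg _ Ig] := Xgood Xg.
have mfg : measurable_fun setT (EFin \o (fun x => f x - g x)).
  apply/measurable_EFinP; apply: measurable_funB => //.
  by apply/measurable_EFinP; exact: measurable_int intf.
have := le_abse_integral mu measurableT mfg.
have -> : (\int[mu]_x (EFin \o (fun x => (f x - g x)%R)) x = \int[mu]_x (f x)%:E)%E.
  rewrite /comp; under eq_integral do rewrite EFinB.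
  by rewrite integralB_EFin // Ig sube0.
have -> : (\int[mu]_x `|(EFin \o (fun x => (f x - g x)%R)) x| = \int[mu]_x (`|f x - g x|%R)%:E)%E.
  by apply: eq_integral => x _ /=.
move=> /le_lt_trans /(_ hg); rewrite -(fineK fin) abse_EFin lte_fin => /ltW.
by [].
Qed.

Lemma linf_sup : no_atoms mu -> Linfty_0 mu `<=` weakstar_closure mu X.
Proof.
move=> na f [fL If]; split => //.
have [mf [M hM]] : Linfty mu f by move/set_mem: fL.
move=> n h e hL e0.
pose M' := `|M|.
have M'0 : 0 <= M' by rewrite normr_ge0.
pose s x := Num.max (- M') (Num.min M' (f x)).
have ms : measurable_fun setT s.
  apply: (measurable_maxr (f := cst (- M')) (g := fun x => Num.min M' (f x))).
    exact: measurable_cst.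
  apply: (measurable_minr (f := cst M') (g := f)) => //; exact: measurable_cst.
have hs x : `|s x| <= M'.
  rewrite ler_norml /s ge_max le_max lexx /= ge_min lexx /=.
  by rewrite andbT; lra.
have fs : {ae mu, forall x, setT x -> (f x)%:E = (s x)%:E}.
  move: hM; apply: filterS => x hx _; congr EFin.
  have := le_trans hx (ler_norm M); rewrite -/M' => hx'.
  move: hx'; rewrite ler_norml => /andP [h1 h2].
  by rewrite /s min_r // max_r.
have mfE : measurable_fun setT (EFin \o f) by exact/measurable_EFinP.
have msE : measurable_fun setT (EFin \o s) by exact/measurable_EFinP.
have Is : \int[mu]_x s x = 0.
  rewrite /Rintegral -(ae_eq_integral (EFin \o s) (EFin \o f) measurableT mfE msE fs).
  by rewrite If.
pose H := \sum_(i < n) fine (\int[mu]_x (`|h i x|)%:E)%E.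
have hint i : mu.-integrable setT (EFin \o h i) by move/set_mem: (hL i).
have Hfin i : (\int[mu]_x (`|h i x|)%:E)%E \is a fin_num.
  by apply: (integrable_fin_num measurableT); exact: integrable_norm.
have H0i i : 0 <= fine (\int[mu]_x (`|h i x|)%:E)%E.
  by apply: fine_ge0; apply: integral_ge0 => x _; rewrite lee_fin.
have H0 : 0 <= H by apply: sumr_ge0 => i _.
have Hle i : fine (\int[mu]_x (`|h i x|)%:E)%E <= H.
  by rewrite /H (bigD1 i) //= lerDl sumr_ge0.
pose dl := e / (2 * (H + 1)).
have dl0 : 0 < dl by apply: divr_gt0 => //; lra.
have [g0 [Xg0 [c hc]]] := Pap_bounded na ms hs dl0.
have cb := cbound ms hs Xg0 hc.
rewrite Is normr0 add0r in cb.
have [mg0 _ _] := Xgood Xg0.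
exists g0 => // i.
have mh : measurable_fun setT (h i) by apply/measurable_EFinP; exact: measurable_int (hint i).
have mphi (u : T -> R) : measurable_fun setT u ->
    measurable_fun setT (EFin \o (fun x => (u x - g0 x) * h i x)).
  move=> mu_; apply/measurable_EFinP; apply: measurable_funM => //.
  exact: measurable_funB.
rewrite (ae_eq_integral (EFin \o (fun x => (s x - g0 x) * h i x)) (EFin \o (fun x => (f x - g0 x) * h i x)) measurableT (mphi _ mf) (mphi _ ms)); last first.
  by move: fs; apply: filterS => x hx _ /=; have := hx I; case => ->.
apply: (le_lt_trans (le_abse_integral _ _ (mphi _ ms))) => //.
pose B := dl + `|c|.
have B0 : 0 <= B by rewrite /B; apply: addr_ge0 => //; exact: ltW.
apply: (@le_lt_trans _ _ (\int[mu]_x (B%:E * (`|h i x|)%:E))%E).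
  apply: ge0_le_integral => //.
  - apply: measurableT_comp => //; exact: mphi.
  - apply/measurable_EFinP; apply: measurable_funM; first exact: measurable_cst.
    exact: measurableT_comp.
  - move=> x _ /=; rewrite -EFinM lee_fin normrM ler_wpM2r //.
    have -> : s x - g0 x = (s x - c - g0 x) + c by ring.
    apply: (le_trans (ler_normD _ _)); rewrite /B lerD //.
rewrite ge0_integralZl_EFin //; last first.
  by apply/measurable_EFinP; exact: measurableT_comp.
rewrite -(fineK (Hfin i)) -EFinM lte_fin.
have [mz|mnz] := eqVneq (nu setT) 0.
  have : (\int[mu]_x (`|h i x|)%:E = 0)%E.
    apply: null_set_integral => //; first by apply/measurable_EFinP; exact: measurableT_comp.
    by rewrite muE2 // mz.
  by move=> ->; rewrite mulr0.
have mp : 0 < nu setT by rewrite lt_neqAle eq_sym mnz nu_ge0.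
have cdl : `|c| <= dl by rewrite -(ler_pM2r mp).
have h1 : B * fine (\int[mu]_x (`|h i x|)%:E)%E <= (2 * dl) * H.
  apply: ler_pM => //; rewrite /B; lra.
have h2 : 2 * dl * H < e.
  have H1 : H + 1 != 0 by apply/eqP; lra.
  have -> : 2 * dl * H = e * H / (H + 1) by rewrite /dl; field; rewrite H1.
  rewrite ltr_pdivrMr; last lra.
  by rewrite ltr_pM2l // ltrDl ltr01.
exact: le_lt_trans h1 h2.
Qed.

Import HBSimple.
Lemma l1_sup : no_atoms mu -> L1_0 mu `<=` L1_closure mu X.
Proof.
move=> na f [fL If]; split => // e e0.
have intf : mu.-integrable setT (EFin \o f) by move/set_mem: fL.
have e4 : 0 < e / 4 by apply: divr_gt0 => //; lra.
have [s [ints hJ]] : exists s : {sfun T >-> R}, mu.-integrable setT (EFin \o (s : T -> R)) /\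
    (\int[mu]_x (`|f x - s x|%R)%:E < (e / 4)%:E)%E.
  have [g_ [intG _]] := approximation_sfun_integrable measurableT intf.
  move/fine_fcvg/cvg_ballP/(_ (e / 4)) => -[] // N _ Nb; exists (g_ N).
  have fin : (\int[mu]_z `|(EFin \o f) z - (g_ N z)%:E|)%E \is a fin_num.
    rewrite integrable_fin_num// integrable_abse//.
    by apply: integrableB => //; exact: intG.
  split; first exact: intG.
  have /= := Nb _ (leqnn N); rewrite /ball/= sub0r normrN -fine_abse// -lte_fin.
  rewrite fineK ?abse_fin_num// => /le_lt_trans; apply.
  by rewrite (le_trans _ (lee_abs _)) //; apply: ge0_le_integral => //.
have ms : measurable_fun setT (s : T -> R) by [].
have [Ms hMs] : exists M : R, forall x, `|s x| <= M.
  have [M [_ /= bdM]] := simple_bounded s.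
  by exists (`|M| + 1) => x; rewrite bdM// ltr_pwDr// ler_norm.
pose m := nu setT.
have m0 : 0 <= m := nu_ge0 mu setT.
pose dl := e / (8 * (m + 1)).
have dl0 : 0 < dl by apply: divr_gt0 => //; lra.
have [g0 [Xg0 [c hc]]] := Pap_bounded na ms hMs dl0.
have cb := cbound ms hMs Xg0 hc.
have ig0 := Xint Xg0.
have [mg0 _ _] := Xgood Xg0.
have mf : measurable_fun setT f by apply/measurable_EFinP; exact: measurable_int intf.
have ifs : mu.-integrable setT (EFin \o (fun x => f x - s x)).
  have -> : EFin \o (fun x => f x - s x) = ((EFin \o f) \- (EFin \o (s : T -> R)))%E.
    by apply: funext => x /=; rewrite EFinB.
  exact: integrableB.
have iafs : mu.-integrable setT (EFin \o (fun x => `|f x - s x|)) := integrable_norm ifs.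
have ifg : mu.-integrable setT (EFin \o (fun x => f x - g0 x)).
  have -> : EFin \o (fun x => f x - g0 x) = ((EFin \o f) \- (EFin \o g0))%E.
    by apply: funext => x /=; rewrite EFinB.
  exact: integrableB.
have iafg : mu.-integrable setT (EFin \o (fun x => `|f x - g0 x|)) := integrable_norm ifg.
have J : \int[mu]_x `|f x - s x| < e / 4.
  rewrite -lte_fin /Rintegral fineK //; exact: (integrable_fin_num measurableT iafs).
have Rf : \int[mu]_x f x = 0 by rewrite /Rintegral If.
have Rs : `|\int[mu]_x s x| <= \int[mu]_x `|f x - s x|.
  have -> : \int[mu]_x s x = - \int[mu]_x (f x - s x) by rewrite RintegralB // Rf sub0r opprK.
  by rewrite normrN; exact: le_normr_Rintegral.
have ic : mu.-integrable setT (EFin \o (fun _ : T => dl + `|c|)) := finite_measure_integrable_cst _ _ measurableT.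
have main : \int[mu]_x `|f x - g0 x| <= \int[mu]_x `|f x - s x| + (dl + `|c|) * m.
  rewrite -Rintegral_cst // -RintegralD //.
  apply: le_Rintegral => //.
    have -> : (EFin \o (fun x => `|f x - s x| + (dl + `|c|))) =
      ((EFin \o (fun x => (`|f x - s x|)%R)) \+ (EFin \o (fun _ => (dl + `|c|)%R)))%E.
      by apply: funext => x /=; rewrite EFinD.
    exact: integrableD.
  move=> x _.
  have -> : f x - g0 x = (f x - s x) + ((s x - c - g0 x) + c) by ring.
  apply: (le_trans (ler_normD _ _)); rewrite lerD //.
  apply: (le_trans (ler_normD _ _)); rewrite lerD //.
have dm : dl * m <= e / 8.
  have m1 : m + 1 != 0 by apply/eqP; lra.
  have -> : dl * m = e / 8 * (m / (m + 1)) by rewrite /dl; field; rewrite m1.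
  apply: ler_piMr; first lra.
  rewrite ler_pdivrMr; lra.
have H1 : \int[mu]_x `|f x - g0 x| < e.
  move: cb main Rs J dm; rewrite -/m mulrDl; lra.
exists g0 => //.
have fin2 := integrable_fin_num measurableT iafg.
rewrite -(fineK fin2) lte_fin; exact: H1.
Qed.
End Final.

Theorem lemma1p3 (d : measure_display) (T : measurableType d) (R : realType)
  (mu : {finite_measure set T -> \bar R}) :
  no_atoms mu ->
  L1_closure mu (Xspan mu) = L1_0 mu /\
  weakstar_closure mu (Xspan mu) = Linfty_0 mu.
Proof.
move=> na; split; apply/seteqP; split.
- exact: l1_sub.
- exact: l1_sup.
- exact: linf_sub.
- exact: linf_sup.
Qed.
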